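(* Let $X=\{X_t\}_{t\in\mathbb T^d}$ be a measurable stationary random field which is positively dependent (associated). Then $X$ is ergodic if and only if it is weakly mixing.
   Context: $\mathbb T\in\{\mathbb Z,\mathbb R\}$, $\lambda$ counting/Lebesgue measure, $B(T)=(-T,T]^d\cap\mathbb T^d$, $C(T)=(2T)^d$. Associated: for all $t_1,\dots,t_n$ and all coordinatewise non-decreasing $g_1,g_2$ for which the covariance is defined, $\mathrm{Cov}(g_1(X_{t_1},\dots,X_{t_n}),g_2(X_{t_1},\dots,X_{t_n}))\ge0$. With $X_t=X_0\circ\theta_t$, $\theta$ a measure-preserving $\mathbb T^d$-action on $(\Omega,\mathcal F,\mathbb P)$, $\sigma_X=\sigma(X_t)$: ergodic means $\frac1{C(T)}\int_{B(T)}\mathbb P(A\cap\theta_t(B))\lambda(dt)\to\mathbb P(A)\mathbb P(B)$ for all $A,B\in\sigma_X$; weakly mixing means $\frac1{C(T)}\int_{B(T)}|\mathbb P(A\cap\theta_t(B))-\mathbb P(A)\mathbb P(B)|\lambda(dt)\to0$ for all $A,B\in\sigma_X$ (equivalently, convergence $\mathbb P(A\cap\theta_{t_n}(B))\to\mathbb P(A)\mathbb P(B)$ along all sequences in some density-one set tending to infinity). *)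

(* Defs.v *)
From HB Require Import structures.
From mathcomp Require Import all_boot all_order all_algebra.
From mathcomp Require Import all_classical all_reals all_analysis.
Set Implicit Arguments. Unset Strict Implicit. Unset Printing Implicit Defensive.
Import Order.TTheory GRing.Theory Num.Theory.
Import numFieldNormedType.Exports.
Local Open Scope classical_set_scope.
Local Open Scope ring_scope.

Definition tadd (G : zmodType) (n : nat) (s t : n.-tuple G) : n.-tuple G :=
  [tuple tnth s i + tnth t i | i < n].
Definition tzero (G : zmodType) (n : nat) : n.-tuple G := [tuple 0 | _ < n].

Definition mp_action (G : zmodType) (n : nat) (R : realType)
  (dO : measure_display) (Omega : measurableType dO) (P : probability Omega R)
  (theta : n.-tuple G -> Omega -> Omega) : Prop :=
  [/\ theta (tzero G n) = id,
      (forall s t, theta (tadd s t) = theta s \o theta t),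
      (forall t, measurable_fun setT (theta t)) &
      (forall t (A : set Omega), measurable A -> P (theta t @^-1` A) = P A)].

Definition field (G : zmodType) (n : nat) (R : realType) (Omega : Type)
  (theta : n.-tuple G -> Omega -> Omega) (X0 : Omega -> R) (t : n.-tuple G)
  : Omega -> R := X0 \o theta t.

Definition sigmaX (G : zmodType) (n : nat) (R : realType) (Omega : Type)
  (theta : n.-tuple G -> Omega -> Omega) (X0 : Omega -> R) : set (set Omega) :=
  <<s [set E | exists t (C : set R), measurable C /\
                 E = field theta X0 t @^-1` C] >>.

Definition coord_nondecr (R : realType) (m : nat) (g : m.-tuple R -> R) : Prop :=
  forall x y : m.-tuple R, (forall i, tnth x i <= tnth y i) -> g x <= g y.

(* association (positive dependence); "the covariance is defined" is read as
   g1(Y), g2(Y) and g1(Y) g2(Y) integrable (the hypotheses of covarianceE). *)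
Definition associated (G : zmodType) (n : nat) (R : realType)
  (dO : measure_display) (Omega : measurableType dO) (P : probability Omega R)
  (theta : n.-tuple G -> Omega -> Omega) (X0 : Omega -> R) : Prop :=
  forall (m : nat) (ts : m.-tuple (n.-tuple G)) (g1 g2 : m.-tuple R -> R),
    coord_nondecr g1 -> coord_nondecr g2 ->
    let Y := fun w => [tuple field theta X0 (tnth ts i) w | i < m] in
    (g1 \o Y) \in Lfun P 1 -> (g2 \o Y) \in Lfun P 1 ->
    ((g1 \o Y) * (g2 \o Y))%R \in Lfun P 1 ->
    (0 <= covariance P (g1 \o Y) (g2 \o Y))%E.

(* integral w.r.t. counting measure over B(T) = (-T,T]^n \cap Z^n, T : nat *)
Fixpoint box_sum (R : realType) (T : nat) (n : nat) :
    (n.-tuple int -> \bar R) -> \bar R :=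
  match n return (n.-tuple int -> \bar R) -> \bar R with
  | 0 => fun f => f [tuple]
  | n'.+1 => fun f =>
      (\sum_(k < 2 * T) box_sum T (fun s : n'.-tuple int =>
          f [tuple of ((k%:Z - T%:Z + 1)%R :: s)]))%E
  end.

(* integral w.r.t. Lebesgue measure over B(T) = (-T,T]^n, as an iterated
   integral (equal to the n-dimensional Lebesgue integral for nonnegative
   jointly measurable integrands, by Tonelli) *)
Fixpoint box_int (R : realType) (T : R) (n : nat) :
    (n.-tuple R -> \bar R) -> \bar R :=
  match n return (n.-tuple R -> \bar R) -> \bar R with
  | 0 => fun f => f [tuple]
  | n'.+1 => fun f =>
      (\int[@lebesgue_measure R]_(x in `](- T)%R, T]%classic)
         box_int T (fun s : n'.-tuple R => f [tuple of x :: s]))%E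
  end.

Definition ergodicZ (n : nat) (R : realType)
  (dO : measure_display) (Omega : measurableType dO) (P : probability Omega R)
  (theta : n.-tuple int -> Omega -> Omega) (X0 : Omega -> R) : Prop :=
  forall A B, sigmaX theta X0 A -> sigmaX theta X0 B ->
    (fun T : nat => ((((2 * T) ^ n)%:R : R)^-1)%:E *
        box_sum T (fun t => P (A `&` (theta t @` B))))%E
      @ \oo --> (P A * P B)%E.

Definition weakly_mixingZ (n : nat) (R : realType)
  (dO : measure_display) (Omega : measurableType dO) (P : probability Omega R)
  (theta : n.-tuple int -> Omega -> Omega) (X0 : Omega -> R) : Prop :=
  forall A B, sigmaX theta X0 A -> sigmaX theta X0 B ->
    (fun T : nat => ((((2 * T) ^ n)%:R : R)^-1)%:E *
        box_sum T (fun t => `| P (A `&` (theta t @` B)) - P A * P B |))%E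
      @ \oo --> 0%E.

Definition ergodicR (n : nat) (R : realType)
  (dO : measure_display) (Omega : measurableType dO) (P : probability Omega R)
  (theta : n.-tuple R -> Omega -> Omega) (X0 : Omega -> R) : Prop :=
  forall A B, sigmaX theta X0 A -> sigmaX theta X0 B ->
    ((((2 * T) ^+ n)^-1)%:E *
        box_int T (fun t => P (A `&` (theta t @` B))))%E
      @[T --> +oo] --> (P A * P B)%E.

Definition weakly_mixingR (n : nat) (R : realType)
  (dO : measure_display) (Omega : measurableType dO) (P : probability Omega R)
  (theta : n.-tuple R -> Omega -> Omega) (X0 : Omega -> R) : Prop :=
  forall A B, sigmaX theta X0 A -> sigmaX theta X0 B ->
    ((((2 * T) ^+ n)^-1)%:E *
        box_int T (fun t => `| P (A `&` (theta t @` B)) - P A * P B |))%E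
      @[T --> +oo] --> 0%E.

(* Main.v *)
Require Import Defs.
From HB Require Import structures.
From mathcomp Require Import all_boot all_order all_algebra.
From mathcomp Require Import all_classical all_reals all_analysis.
From mathcomp Require Import ring lra.
From mathcomp Require Import measurable_realfun.
Import Order.TTheory GRing.Theory Num.Theory.
Import numFieldNormedType.Exports.
Local Open Scope classical_set_scope.
Local Open Scope ring_scope.
Set Implicit Arguments. Unset Strict Implicit. Unset Printing Implicit Defensive.


Section Eps.
Context {R : realType} {J : Type} (F : set_system J) {PF : ProperFilter F}.

Lemma fin_between (x : \bar R) (a b : R) : (a%:E <= x)%E -> (x <= b%:E)%E -> x = (fine x)%:E.
Proof. by case: x. Qed.

Lemma cvgeP (u : J -> \bar R) (l : R) :
  (u j @[j --> F] --> l%:E) <->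
  (forall e : R, 0 < e -> \forall j \near F, ((l - e)%:E <= u j)%E /\ (u j <= (l + e)%:E)%E).
Proof.
split.
- move=> /fine_cvgP[finu /cvgrPdist_le cu] e e0.
  near=> j.
  have fj : u j \is a fin_num by near: j.
  have hj : `|l - fine (u j)| <= e by near: j; exact: cu.
  rewrite -(fineK fj) !lee_fin.
  move: hj; rewrite ler_norml => /andP[h1 h2]; split; lra.
- move=> H; apply/fine_cvgP; split.
  + have := H 1 ltr01; apply: filterS => j [h1 h2].
    by move: h1 h2; case: (u j).
  + apply/cvgrPdist_le => e e0.
    have := H e e0; apply: filterS => j [h1 h2].
    have := fin_between h1 h2 => ej.
    move: h1 h2; rewrite ej !lee_fin => h1 h2 /=.
    rewrite ler_norml; apply/andP; split; lra.
Unshelve. all: end_near.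
Qed.

End Eps.

Section Core.
Context {R : realType} {dO : measure_display} {Omega : measurableType dO}
  (P : probability Omega R) {I : Type} (th : I -> Omega -> Omega)
  (S G : set (set Omega)).
Hypothesis SG : S = <<s G >>.
Hypothesis GI : setI_closed G.
Hypothesis Smeas : forall A, S A -> measurable A.
Hypothesis thm : forall t B, measurable B -> measurable (th t @` B).
Hypothesis thinj : forall t, injective (th t).
Hypothesis thT : forall t, th t @` setT = setT.
Hypothesis thP : forall t B, measurable B -> P (th t @` B) = P B.
Hypothesis assoc : forall A B t, G A -> G B -> (P A * P B <= P (A `&` th t @` B))%E.

Context {J : Type} (F : set_system J) {PF : ProperFilter F}
  (Av : J -> (I -> \bar R) -> \bar R) (M : (I -> \bar R) -> Prop).
Hypothesis Mphi : forall A B, S A -> S B -> M (fun t => P (A `&` th t @` B)).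
Hypothesis MD : forall A B, S A -> S B ->
  M (fun t => `|P (A `&` th t @` B) - P A * P B|%E).
Hypothesis Mcst : forall r : R, 0 <= r -> M (cst r%:E).
Hypothesis Madd : forall f g, M f -> M g -> M (fun t => f t + g t)%E.
Hypothesis Avc : forall r : R, 0 <= r -> \forall j \near F, Av j (cst r%:E) = r%:E.
Hypothesis Avadd : forall j f g, M f -> M g -> (forall t, 0 <= f t)%E ->
  (forall t, 0 <= g t)%E -> Av j (fun t => f t + g t)%E = (Av j f + Av j g)%E.
Hypothesis Avle : \forall j \near F, forall f g, M f -> M g -> (forall t, 0 <= f t)%E ->
  (forall t, f t <= g t)%E -> (Av j f <= Av j g)%E.

Let ST : S setT.
Proof. by rewrite SG; have := (@sigma_algebraCD _ setT G set0 (@sigma_algebra0 _ setT G)); rewrite setD0. Qed.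
Let SC A : S A -> S (~` A).
Proof. by rewrite SG => h; have := (@sigma_algebraCD _ setT G A h); rewrite setTD. Qed.
Let SU (A : (set Omega)^nat) : (forall n, S (A n)) -> S (\bigcup_n A n).
Proof. by rewrite SG => h; exact: (@sigma_algebra_bigcup _ setT G A h). Qed.
Let SU2 A B : S A -> S B -> S (A `|` B).
Proof. by move=> hA hB; rewrite -bigcup2E; apply: SU => -[|[|n]] //=; rewrite SG; exact: (@sigma_algebra0 _ setT G). Qed.
Let SI A B : S A -> S B -> S (A `&` B).
Proof. by move=> hA hB; rewrite -[A `&` B]setCK setCI; apply/SC/SU2; apply: SC. Qed.
Let SD A B : S A -> S B -> S (A `\` B).
Proof. by move=> hA hB; rewrite setDE; apply: SI => //; apply: SC. Qed.

Let mu (X : set Omega) : R := fine (P X).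
Let PE X : measurable X -> P X = (mu X)%:E.
Proof. by move=> mX; rewrite /mu fineK // fin_num_measure. Qed.
Let mu_ge0 X : 0 <= mu X.
Proof. by rewrite /mu fine_ge0. Qed.
Let mu_le1 X : measurable X -> mu X <= 1.
Proof. by move=> mX; rewrite -lee_fin -PE // probability_le1. Qed.
Let mu_le X Y : measurable X -> measurable Y -> X `<=` Y -> mu X <= mu Y.
Proof. by move=> mX mY XY; rewrite -lee_fin -!PE //; apply: le_measure => //; rewrite inE. Qed.
Let muD X Y : measurable X -> measurable Y -> Y `<=` X -> mu (X `\` Y) = mu X - mu Y.
Proof.
move=> mX mY YX; rewrite /mu measureD //; last by apply: (le_lt_trans (probability_le1 P mX)); rewrite ltry.
by rewrite (setIidr YX) fineB // fin_num_measure.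
Qed.

Let phi A B t := P (A `&` th t @` B).
Let DD A B := fun t => `|phi A B t - P A * P B|%E.
Let Wp A B := Av j (DD A B) @[j --> F] --> 0%E.

Let mI A B t : S A -> S B -> measurable (A `&` th t @` B).
Proof. by move=> hA hB; apply: measurableI; [exact: Smeas|apply: thm; exact: Smeas]. Qed.

Let phiE A B t : S A -> S B -> phi A B t = (mu (A `&` th t @` B))%:E.
Proof. by move=> hA hB; rewrite /phi PE //; exact: mI. Qed.

Let DDE A B t : S A -> S B ->
  DD A B t = (`|mu (A `&` th t @` B) - mu A * mu B|)%:E.
Proof.
by move=> hA hB; rewrite /DD phiE // !PE //; try exact: Smeas.
Qed.

Let DD_ge0 A B t : (0 <= DD A B t)%E.
Proof. exact: abse_ge0. Qed.

Let Av0 : \forall j \near F, Av j (cst 0%E) = 0%E.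
Proof. exact: (Avc (lexx 0)). Qed.

Let Av_ge0 f : M f -> (forall t, 0 <= f t)%E -> \forall j \near F, (0 <= Av j f)%E.
Proof.
move=> Mf f0; near=> j.
have <- : Av j (cst 0%E) = 0%E by near: j; exact: Av0.
have hle : forall f g, M f -> M g -> (forall t, 0 <= f t)%E ->
  (forall t, f t <= g t)%E -> (Av j f <= Av j g)%E by near: j; exact: Avle.
apply: hle => //; exact: (Mcst (lexx 0)).
Unshelve. all: end_near.
Qed.

Lemma av_tail (f : I -> \bar R) (g1 g2 : nat -> I -> \bar R) (dl : nat -> R) :
  M f -> (forall t, 0 <= f t)%E ->
  (forall N, M (g1 N)) -> (forall N, M (g2 N)) ->
  (forall N t, 0 <= g1 N t)%E -> (forall N t, 0 <= g2 N t)%E ->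
  (forall N, Av j (g1 N) @[j --> F] --> 0%E) ->
  (forall N, Av j (g2 N) @[j --> F] --> 0%E) ->
  (forall N, 0 <= dl N) -> (forall e, 0 < e -> exists N, dl N <= e) ->
  (forall N t, f t <= g1 N t + g2 N t + (dl N)%:E)%E ->
  Av j f @[j --> F] --> 0%E.
Proof.
move=> Mf f0 M1 M2 g10 g20 c1 c2 dl0 dle fle.
apply/cvgeP => e e0.
have e30 : 0 < e / 3 by rewrite divr_gt0.
have [N dN] := dle _ e30.
have := (proj1 (cvgeP _ _) (c1 N) _ e30); have := (proj1 (cvgeP _ _) (c2 N) _ e30).
move=> h2 h1.
have hc := Avc (dl0 N).
have hf := Av_ge0 Mf f0.
near=> j.
have [_ u1] : ((0 - e / 3)%:E <= Av j (g1 N))%E /\ (Av j (g1 N) <= (0 + e / 3)%:E)%E by near: j; exact: h1.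
have [_ u2] : ((0 - e / 3)%:E <= Av j (g2 N))%E /\ (Av j (g2 N) <= (0 + e / 3)%:E)%E by near: j; exact: h2.
have hcj : Av j (cst (dl N)%:E) = (dl N)%:E by near: j; exact: hc.
have hfj : (0 <= Av j f)%E by near: j; exact: hf.
have hle : forall f g, M f -> M g -> (forall t, 0 <= f t)%E ->
  (forall t, f t <= g t)%E -> (Av j f <= Av j g)%E by near: j; exact: Avle.
split; first by apply: le_trans hfj; rewrite lee_fin; lra.
have MS : M (fun t => g1 N t + g2 N t)%E by exact: Madd.
have S0 : forall t, (0 <= g1 N t + g2 N t)%E by move=> t; apply: adde_ge0.
apply: (le_trans (@hle f (fun t => (g1 N t + g2 N t) + cst (dl N)%:E t)%E _ _ _ _)) => //.
- by apply: Madd => //; exact: Mcst.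
rewrite Avadd //; last by move=> t; rewrite /= lee_fin.
rewrite Avadd // hcj.
apply: (le_trans (leeD (leeD u1 u2) (lexx _))).
rewrite -!EFinD lee_fin; lra.
- exact: Mcst.
Unshelve. all: end_near.
Qed.


Let GS A : G A -> S A.
Proof. by rewrite SG; exact: sub_sigma_algebra. Qed.

Let nrm_le (v : R) : v <= `|v| /\ - v <= `|v|.
Proof. by split; [exact: ler_norm|rewrite -normrN; exact: ler_norm]. Qed.

Let ineqD (a b p q : R) : `|(a - b) - (p - q)| <= `|a - p| + `|b - q|.
Proof.
have [h1 h2] := nrm_le (a - p); have [h3 h4] := nrm_le (b - q).
rewrite ler_norml; apply/andP; split; lra.
Qed.

Let ineqN (x xN y yN dd : R) : xN <= x -> x - xN <= dd -> yN <= y -> y - yN <= dd ->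
  `|x - y| <= `|xN - yN| + 2 * dd.
Proof.
move=> *; have [h1 h2] := nrm_le (xN - yN).
rewrite ler_norml; apply/andP; split; lra.
Qed.

Let Wp_cst0 f : f = cst 0%E -> Av j f @[j --> F] --> 0%E.
Proof.
move=> ->; apply/cvgeP => e e0; apply: filterS Av0 => j ->.
by rewrite !lee_fin; split; lra.
Qed.

Let fin_ev (u : J -> \bar R) : u j @[j --> F] --> 0%E ->
  forall e, 0 < e -> \forall j \near F, exists r : R, u j = r%:E /\ - e <= r <= e.
Proof.
move=> /cvgeP H e e0; apply: filterS (H e e0) => j [h1 h2].
exists (fine (u j)); rewrite -(fin_between h1 h2); split => //.
by have ee := fin_between h1 h2; move: h1 h2; rewrite ee !lee_fin => h1 h2; apply/andP; split; lra.
Qed.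

Lemma EW_G A B : G A -> G B ->
  Av j (phi A B) @[j --> F] --> (P A * P B)%E -> Wp A B.
Proof.
move=> gA gB; have hA := GS gA; have hB := GS gB.
have mA := Smeas hA; have mB := Smeas hB.
rewrite !PE // -EFinM.
have c0 : 0 <= mu A * mu B by rewrite mulr_ge0.
have eq : phi A B = (fun t => DD A B t + cst (mu A * mu B)%:E t)%E.
  apply/funext => t; rewrite DDE // phiE //= -EFinD.
  have := assoc t gA gB; rewrite /phi !PE //; last exact: mI.
  rewrite -EFinM lee_fin => h.
  by rewrite ger0_norm ?subr_ge0 // subrK.
move=> /cvgeP H; apply/cvgeP => e e0.
have hc := Avc c0.
near=> j.
have [h1 h2] : (((mu A * mu B) - e)%:E <= Av j (phi A B))%E /\ (Av j (phi A B) <= ((mu A * mu B) + e)%:E)%E.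
  by near: j; exact: H.
have hcj : Av j (cst (mu A * mu B)%:E) = (mu A * mu B)%:E by near: j; exact: hc.
have MDD : M (DD A B) := MD hA hB.
move: h1 h2; rewrite eq (Avadd _ MDD (Mcst c0)) //.
rewrite hcj; case: (Av j (DD A B)) => [r||] //=; rewrite -?EFinD ?lee_fin.
- by move=> h1 h2; split; lra.
Unshelve. all: end_near.
Qed.

Lemma WE A B : S A -> S B -> Wp A B ->
  Av j (phi A B) @[j --> F] --> (P A * P B)%E.
Proof.
move=> hA hB; have mA := Smeas hA; have mB := Smeas hB.
rewrite !PE // -EFinM => W.
have c0 : 0 <= mu A * mu B by rewrite mulr_ge0.
have up t : (phi A B t <= DD A B t + cst (mu A * mu B)%:E t)%E.
  rewrite DDE // phiE //= -EFinD lee_fin.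
  have [h1 h2] := nrm_le (mu (A `&` th t @` B) - mu A * mu B); lra.
have lo t : (cst (mu A * mu B)%:E t <= phi A B t + DD A B t)%E.
  rewrite DDE // phiE //= -EFinD lee_fin.
  have [h1 h2] := nrm_le (mu (A `&` th t @` B) - mu A * mu B); lra.
have Mp := Mphi hA hB; have Md := MD hA hB.
have p0 t : (0 <= phi A B t)%E by rewrite phiE // lee_fin.
apply/cvgeP => e e0.
have hc := Avc c0.
have hW := fin_ev W e0.
near=> j.
have hcj : Av j (cst (mu A * mu B)%:E) = (mu A * mu B)%:E by near: j; exact: hc.
have [r [rE re]] : exists r : R, Av j (DD A B) = r%:E /\ - e <= r <= e by near: j; exact: hW.
have MDD : M (DD A B) := Md.
have MPP : M (phi A B) := Mp.
have hle : forall f g, M f -> M g -> (forall t, 0 <= f t)%E ->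
  (forall t, f t <= g t)%E -> (Av j f <= Av j g)%E by near: j; exact: Avle.
have u1 := hle _ _ MPP (Madd MDD (Mcst c0)) p0 up.
have u2 := hle _ _ (Mcst c0) (Madd MPP MDD) (fun t => c0 : (0 <= cst (mu A * mu B)%:E t)%E) lo.
move: u1 u2; rewrite (Avadd _ MDD (Mcst c0)) //.
rewrite (Avadd _ MPP MDD) // hcj rE.
case: (Av j (phi A B)) => [y||] //=; rewrite -?EFinD ?lee_fin //.
by move=> h1 h2; split; lra.
Unshelve. all: end_near.
Qed.


Let imD t X Y : th t @` (X `\` Y) = th t @` X `\` th t @` Y.
Proof.
apply/seteqP; split => z.
- move=> [x [Xx nYx] <-]; split; first by exists x.
  by move=> [y Yy /thinj eyx]; apply: nYx; rewrite -eyx.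
- by move=> [[x Xx <-] nY]; exists x => //; split => // Yx; apply: nY; exists x.
Qed.

Let muth t Z : measurable Z -> mu (th t @` Z) = mu Z.
Proof. by move=> mZ; rewrite /mu thP. Qed.

Let setDI_r (X Y C : set Omega) : (X `\` Y) `&` C = (X `&` C) `\` (Y `&` C).
Proof. by apply/seteqP; split => z /=; rewrite /setD /setI /=; tauto. Qed.

Let setDI_l (C X Y : set Omega) : C `&` (X `\` Y) = (C `&` X) `\` (C `&` Y).
Proof. by apply/seteqP; split => z /=; rewrite /setD /setI /=; tauto. Qed.

Let nd_eps (Fs : (set Omega)^nat) : (forall n, S (Fs n)) -> nondecreasing_seq Fs ->
  forall e, 0 < e -> exists N, 2 * (mu (\bigcup_n Fs n) - mu (Fs N)) <= e.
Proof.
move=> hF ndF e e0.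
have hU := SU hF.
have := nondecreasing_cvg_mu (mu:=P) (fun n => Smeas (hF n)) (Smeas hU) ndF.
move=> h.
have {h} : (fun n => P (Fs n)) x @[x --> \oo] --> (mu (\bigcup_n Fs n))%:E.
  by rewrite -PE //; exact: Smeas.
move=> /cvgeP => /(_ (e / 2)); rewrite divr_gt0 // => /(_ isT) [N _ /(_ N (leqnn N))].
rewrite /= PE ?lee_fin; last exact: Smeas.
by move=> [h1 h2]; exists N; lra.
Qed.

Lemma extA B : S B -> (forall A, G A -> Wp A B) -> forall A, S A -> Wp A B.
Proof.
move=> hB hG; have mB := Smeas hB.
suff: S `<=` [set A | S A /\ Wp A B] by move=> h A /h[].
rewrite {1}SG; apply: (lambda_system_subset GI) => //; last first.
  by move=> A gA; split; [exact: GS|exact: hG].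
split => //.
- split => //; apply: Wp_cst0; apply/funext => t.
  by rewrite /DD /phi setTI thP // probability_setT mul1e subee ?abse0 // fin_num_measure.
- move=> A X XA [hA WA] [hX WX]; split; first exact: SD.
  have mA := Smeas hA; have mX := Smeas hX.
  apply: (@av_tail _ (fun=> DD A B) (fun=> DD X B) (fun=> 0)) => //.
  + exact: MD (SD hA hX) hB.
  + by move=> _; exact: MD.
  + by move=> _; exact: MD.
  + by move=> e e0; exists 0%N; exact: ltW.
  + move=> _ t; rewrite adde0 !DDE //; try exact: SD.
    rewrite -EFinD lee_fin setDI_r muD //; try exact: mI.
      by rewrite (muD mA mX XA) mulrBl; apply: ineqD.
    by move=> z [? ?]; split => //; apply: XA.
- move=> Fs ndF HF; have hF n := (HF n).1.
  have hU := SU hF; split => //.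
  apply: (@av_tail _ (fun N => DD (Fs N) B) (fun=> cst 0%E)
     (fun N => 2 * (mu (\bigcup_n Fs n) - mu (Fs N)))) => //.
  + exact: MD.
  + by move=> N; exact: MD.
  + by move=> N; exact: (Mcst (lexx 0)).
  + by move=> N; exact: (HF N).2.
  + by move=> N; exact: Wp_cst0.
  + move=> N; rewrite mulr_ge0 // subr_ge0; apply: mu_le; try exact: Smeas.
    exact: bigcup_sup.
  + exact: nd_eps.
  + move=> N t; rewrite /= adde0 !DDE // -EFinD lee_fin.
    have sub : Fs N `<=` \bigcup_n Fs n by exact: bigcup_sup.
    have mFN := Smeas (hF N); have mU := Smeas hU.
    apply: ineqN.
    * by apply: mu_le; try exact: mI; move=> z [? ?]; split => //; apply: sub.
    * rewrite -muD; try exact: mI; last by move=> z [? ?]; split => //; apply: sub.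
      rewrite -muD //; apply: mu_le; try exact: measurableD; first by apply: measurableD; exact: mI.
      by move=> z [[? ?] nz]; split => // ?; apply: nz.
    * by apply: ler_wpM2r => //; apply: mu_le.
    * have h1 := mu_le mFN mU sub; have h2 := mu_le1 mB; have h3 := mu_ge0 B; nra.
Qed.

Lemma extB A : S A -> (forall B, G B -> Wp A B) -> forall B, S B -> Wp A B.
Proof.
move=> hA hG; have mA := Smeas hA.
suff: S `<=` [set B | S B /\ Wp A B] by move=> h B /h[].
rewrite {1}SG; apply: (lambda_system_subset GI) => //; last first.
  by move=> B gB; split; [exact: GS|exact: hG].
split => //.
- split => //; apply: Wp_cst0; apply/funext => t.
  by rewrite /DD /phi thT setIT probability_setT mule1 subee ?abse0 // fin_num_measure.
- move=> B X XB [hB WB] [hX WX]; split; first exact: SD.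
  have mB := Smeas hB; have mX := Smeas hX.
  apply: (@av_tail _ (fun=> DD A B) (fun=> DD A X) (fun=> 0)) => //.
  + exact: MD hA (SD hB hX).
  + by move=> _; exact: MD.
  + by move=> _; exact: MD.
  + by move=> e e0; exists 0%N; exact: ltW.
  + move=> _ t; rewrite adde0 !DDE //; try exact: SD.
    rewrite -EFinD lee_fin imD setDI_l muD //; try exact: mI.
      by rewrite (muD mB mX XB) mulrBr; apply: ineqD.
    by move=> z [Az [x Xx ez]]; split => //; exists x => //; exact: XB.
- move=> Fs ndF HF; have hF n := (HF n).1.
  have hU := SU hF; split => //.
  apply: (@av_tail _ (fun N => DD A (Fs N)) (fun=> cst 0%E)
     (fun N => 2 * (mu (\bigcup_n Fs n) - mu (Fs N)))) => //.
  + exact: MD.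
  + by move=> N; exact: MD.
  + by move=> N; exact: (Mcst (lexx 0)).
  + by move=> N; exact: (HF N).2.
  + by move=> N; exact: Wp_cst0.
  + move=> N; rewrite mulr_ge0 // subr_ge0; apply: mu_le; try exact: Smeas.
    exact: bigcup_sup.
  + exact: nd_eps.
  + move=> N t; rewrite /= adde0 !DDE // -EFinD lee_fin.
    have sub : Fs N `<=` \bigcup_n Fs n by exact: bigcup_sup.
    have mFN := Smeas (hF N); have mU := Smeas hU.
    have subt : th t @` Fs N `<=` th t @` \bigcup_n Fs n.
      by move=> z [x Fx <-]; exists x => //; apply: sub.
    apply: ineqN.
    * by apply: mu_le; try exact: mI; move=> z [? ?]; split => //; apply: subt.
    * rewrite -muD; try exact: mI; last by move=> z [? ?]; split => //; apply: subt.
      rewrite -muD // -(muth t (measurableD mU mFN)).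
      apply: mu_le; [by apply: measurableD; exact: mI|by apply: thm; exact: measurableD|].
      move=> z [[Az [x Ux ez]] nz]; subst z; exists x => //.
      by apply: (conj Ux) => Fx; apply: nz; split => //; exists x.
    * by apply: ler_wpM2l => //; apply: mu_le.
    * have h1 := mu_le mFN mU sub; have h2 := mu_le1 mA; have h3 := mu_ge0 A; nra.
Qed.

Theorem core_equiv :
  (forall A B, S A -> S B -> Av j (phi A B) @[j --> F] --> (P A * P B)%E) <->
  (forall A B, S A -> S B -> Wp A B).
Proof.
split => [E A B hA hB|W A B hA hB]; last exact: (WE hA hB (W A B hA hB)).
apply: (extB hA) hB => B' gB'.
apply: (extA (GS gB')) hA => A' gA'.
apply: EW_G => //; apply: E; exact: GS.
Qed.

End Core.


Definition tneg (G : zmodType) (n : nat) (t : n.-tuple G) : n.-tuple G :=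
  [tuple - tnth t i | i < n].

Lemma taddN (G : zmodType) n (t : n.-tuple G) : tadd t (tneg t) = tzero G n.
Proof. by apply: eq_from_tnth => i; rewrite !tnth_map !tnth_ord_tuple subrr. Qed.
Lemma taddNt (G : zmodType) n (t : n.-tuple G) : tadd (tneg t) t = tzero G n.
Proof. by apply: eq_from_tnth => i; rewrite !tnth_map !tnth_ord_tuple addNr. Qed.

Section SigmaHelp.
Context {T : Type} (X : set (set T)).
Lemma sgT : <<s X >> setT.
Proof. by have := (@sigma_algebraCD _ setT X set0 (@sigma_algebra0 _ setT X)); rewrite setD0. Qed.
Lemma sgC A : <<s X >> A -> <<s X >> (~` A).
Proof. by move=> h; have := (@sigma_algebraCD _ setT X A h); rewrite setTD. Qed.
Lemma sgU2 A B : <<s X >> A -> <<s X >> B -> <<s X >> (A `|` B).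
Proof.
move=> hA hB; rewrite -bigcup2E; apply: (@sigma_algebra_bigcup _ setT X) => -[|[|k]] //=.
exact: (@sigma_algebra0 _ setT X).
Qed.
Lemma sgI A B : <<s X >> A -> <<s X >> B -> <<s X >> (A `&` B).
Proof. by move=> hA hB; rewrite -[A `&` B]setCK setCI; apply: sgC; apply: sgU2; apply: sgC. Qed.
End SigmaHelp.

Section Field.
Context (G : zmodType) (n : nat) (R : realType) (dO : measure_display)
  (Omega : measurableType dO) (P : probability Omega R)
  (theta : n.-tuple G -> Omega -> Omega) (X0 : Omega -> R).
Hypothesis hth : mp_action P theta.
Hypothesis mX0 : measurable_fun setT X0.

Let th0 : theta (tzero G n) = id. Proof. by case: hth. Qed.
Let thD s t : theta (tadd s t) = theta s \o theta t. Proof. by case: hth. Qed.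
Let thm t : measurable_fun setT (theta t). Proof. by case: hth. Qed.
Let thP t A : measurable A -> P (theta t @^-1` A) = P A. Proof. by case: hth => _ _ _; apply. Qed.

Lemma thK t x : theta (tneg t) (theta t x) = x.
Proof. by rewrite -[LHS]/((theta (tneg t) \o theta t) x) -thD taddNt th0. Qed.
Lemma thKV t x : theta t (theta (tneg t) x) = x.
Proof. by rewrite -[LHS]/((theta t \o theta (tneg t)) x) -thD taddN th0. Qed.

Lemma imgE t B : theta t @` B = theta (tneg t) @^-1` B.
Proof.
apply/seteqP; split => z.
- by move=> [x Bx <-]; rewrite /= thK.
- by move=> /= Bz; exists (theta (tneg t) z) => //; rewrite thKV.
Qed.

Lemma img_meas t B : measurable B -> measurable (theta t @` B).
Proof. by move=> mB; rewrite imgE -[X in measurable X]setTI; apply: thm. Qed.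

Lemma img_inj t : injective (theta t).
Proof. by move=> x y /(congr1 (theta (tneg t))); rewrite !thK. Qed.

Lemma img_T t : theta t @` setT = setT.
Proof. by rewrite imgE preimage_setT. Qed.

Lemma img_P t B : measurable B -> P (theta t @` B) = P B.
Proof. by move=> mB; rewrite imgE thP. Qed.

Lemma field_meas t : measurable_fun setT (field theta X0 t).
Proof. exact: measurableT_comp. Qed.

Definition orth (s : seq (n.-tuple G * R)) : set Omega :=
  [set w | forall p, p \in s -> p.2 < field theta X0 p.1 w].
Definition Gorth : set (set Omega) := [set E | exists s, E = orth s].

Lemma orth_cat s1 s2 : orth (s1 ++ s2) = orth s1 `&` orth s2.
Proof.
apply/seteqP; split => w /=.
- by move=> h; split => p ps; apply: h; rewrite mem_cat ps ?orbT.
- by move=> [h1 h2] p; rewrite mem_cat => /orP[/h1|/h2].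
Qed.

Lemma Gorth_setI : setI_closed Gorth.
Proof. by move=> _ _ [s1 ->] [s2 ->]; exists (s1 ++ s2); rewrite orth_cat. Qed.

Lemma orth_img t s :
  theta t @` orth s = orth (map (fun p => (tadd p.1 (tneg t), p.2)) s).
Proof.
rewrite imgE; apply/seteqP; split => w /=.
- move=> h p /mapP[q qs ->] /=; rewrite /field thD; exact: h.
- move=> h p ps; have := h (tadd p.1 (tneg t), p.2).
  by rewrite /field thD; apply; apply/mapP; exists p.
Qed.


Lemma orth_cons p s : orth (p :: s) = field theta X0 p.1 @^-1` `]p.2, +oo[ `&` orth s.
Proof.
rewrite -cat1s orth_cat; congr (_ `&` _); apply/seteqP; split => w /=.
- by move=> /(_ p (mem_head _ _)); rewrite in_itv /= andbT.
- by move=> h q; rewrite inE => /eqP ->; move: h; rewrite in_itv /= andbT.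
Qed.

Lemma orth_nil : orth [::] = setT.
Proof. by apply/seteqP; split => w //= _ p; rewrite in_nil. Qed.

Lemma sigmaX_Gorth : sigmaX theta X0 = <<s Gorth >>.
Proof.
apply/seteqP; split.
- apply: smallest_sub; first exact: smallest_sigma_algebra.
  move=> _ [t [C [mC ->]]].
  pose H := [set C : set R | <<s Gorth >> (field theta X0 t @^-1` C)].
  suff : <<s RGenOInfty.G (R:=R) >> `<=` H.
    move=> /(_ C); apply; have := @eq_ind _ _ (fun X => X C) mC _ (RGenOInfty.measurableE R).
    by [].
  apply: smallest_sub.
  + split.
    * by rewrite /H /= preimage_set0; exact: (@sigma_algebra0 _ setT Gorth).
    * by move=> A HA; rewrite /H /= setTD preimage_setC; apply: sgC.
    * move=> A HA; rewrite /H /= preimage_bigcup.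
      by apply: (@sigma_algebra_bigcup _ setT Gorth).
  + move=> _ [c ->]; rewrite /H; apply: sub_sigma_algebra; exists [:: (t, c)].
    by rewrite orth_cons orth_nil setIT.
- apply: smallest_sub; first exact: smallest_sigma_algebra.
  move=> _ [s ->]; elim: s => [|p s ih]; first by rewrite orth_nil; exact: sgT.
  rewrite orth_cons; apply: sgI => //; apply: sub_sigma_algebra.
  by exists p.1, `]p.2, +oo[%classic; split => //; exact: measurable_itv.
Qed.

Lemma sigmaX_meas A : sigmaX theta X0 A -> measurable A.
Proof.
apply: smallest_sub; first exact: sigma_algebra_measurable.
move=> _ [t [C [mC ->]]]; rewrite -[X in measurable X]setTI; exact: field_meas.
Qed.

Section Assoc.
Variables s1 s2 : seq (n.-tuple G * R).
Let L := s1 ++ s2.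
Let m := size L.
Let dft : n.-tuple G * R := (tzero G n, 0).
Let ts : m.-tuple (n.-tuple G) := map_tuple fst (in_tuple L).
Let cs (i : nat) : R := (nth dft L i).2.
Let gK (K : pred nat) (x : m.-tuple R) : R :=
  if [forall i : 'I_m, K i ==> (cs i < tnth x i)] then 1 else 0.
Let Y := fun w => [tuple field theta X0 (tnth ts i) w | i < m].

Let gK_mono K : coord_nondecr (gK K).
Proof.
move=> x y xy; rewrite /gK; case: ifPn => [/forallP hx|_]; last by case: ifP.
rewrite ifT //; apply/forallP => i; apply/implyP => Ki.
by apply: (lt_le_trans _ (xy i)); have := hx i; rewrite Ki.
Qed.

Let tnthY w (i : 'I_m) : tnth (Y w) i = field theta X0 (nth dft L i).1 w.
Proof. by rewrite /Y tnth_map tnth_ord_tuple /ts tnth_map (tnth_nth dft). Qed.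

Let g1E : gK (fun i => i < size s1)%N \o Y = \1_(orth s1).
Proof.
apply/funext => w.
rewrite /= indicE /gK.
case: ifPn => [/forallP h|/forallP h].
- have hw : orth s1 w.
    move=> p ps.
    have ip1 : (index p s1 < size s1)%N by rewrite index_mem.
    have ip : (index p s1 < m)%N by rewrite /m /L size_cat (leq_trans ip1) // leq_addr.
    move: (h (Ordinal ip)) => /implyP /(_ ip1).
    have e : nth dft L (index p s1) = p by rewrite /L nth_cat ip1 nth_index.
    by rewrite tnthY /cs e.
  by rewrite mem_set.
- rewrite memNset //; move=> hw; apply: h => i; apply/implyP => Ki.
  have e : nth dft L i = nth dft s1 i by rewrite /L nth_cat Ki.
  rewrite tnthY /cs e; apply: hw; exact: mem_nth.
Qed.
Let g2E : gK (fun i => ~~ (i < size s1))%N \o Y = \1_(orth s2).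
Proof.
apply/funext => w.
rewrite /= indicE /gK.
case: ifPn => [/forallP h|/forallP h].
- have hw : orth s2 w.
    move=> p ps.
    have ip1 : (index p s2 < size s2)%N by rewrite index_mem.
    have ip : (size s1 + index p s2 < m)%N by rewrite /m /L size_cat ltn_add2l.
    have ip2 : ~~ (size s1 + index p s2 < size s1)%N by rewrite -leqNgt leq_addr.
    move: (h (Ordinal ip)) => /implyP /(_ ip2).
    have e : nth dft L (size s1 + index p s2) = p.
      by rewrite /L nth_cat (negbTE ip2) addKn nth_index.
    by rewrite tnthY /cs e.
  by rewrite mem_set.
- rewrite memNset //; move=> hw; apply: h => i; apply/implyP => Ki.
  have e : nth dft L i = nth dft s2 (i - size s1) by rewrite /L nth_cat (negbTE Ki).
  rewrite tnthY /cs e; apply: hw; apply: mem_nth.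
  have hi : (i < size s1 + size s2)%N by rewrite -size_cat; exact: ltn_ord.
  by rewrite ltn_subLR // leqNgt.
Qed.

Lemma assoc_orth : associated P theta X0 ->
  (P (orth s1) * P (orth s2) <= P (orth s1 `&` orth s2))%E.
Proof.
move=> hass.
have H := hass m ts (gK (fun i => i < size s1)%N) (gK (fun i => ~~ (i < size s1))%N)
  (gK_mono _) (gK_mono _).
cbv zeta in H.
have m1 : measurable (orth s1) by apply: sigmaX_meas; rewrite sigmaX_Gorth; apply: sub_sigma_algebra; exists s1.
have m2 : measurable (orth s2) by apply: sigmaX_meas; rewrite sigmaX_Gorth; apply: sub_sigma_algebra; exists s2.
have L1 (A : set Omega) : measurable A -> \1_A \in Lfun P 1.
  by move=> mA; apply/Lfun1_integrable; exact: integrable_indic.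
move: H; rewrite -/Y g1E g2E => H.
have mI := measurableI _ _ m1 m2.
have eI : \1_(orth s1) * \1_(orth s2) = \1_(orth s1 `&` orth s2) :> (Omega -> R).
  by apply/funext => w; rewrite indicI.
have := H (L1 _ m1) (L1 _ m2) (eq_ind_r (fun f => f \in Lfun P 1) (L1 _ mI) eI).
rewrite covarianceE ?L1 //; last by rewrite eI; exact: L1.
rewrite eI !expectation_indic //.
by rewrite sube_ge0 // fin_numM // fin_num_measure.
Qed.
End Assoc.

Lemma assoc_img (hass : associated P theta X0) A B t : Gorth A -> Gorth B ->
  (P A * P B <= P (A `&` theta t @` B))%E.
Proof.
move=> [s1 ->] [s2 ->].
have mB : measurable (orth s2).
  by apply: sigmaX_meas; rewrite sigmaX_Gorth; apply: sub_sigma_algebra; exists s2.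
rewrite -(img_P t mB) orth_img; exact: assoc_orth.
Qed.

Lemma field_equiv (hass : associated P theta X0) {J : Type} (F : set_system J)
  {PF : ProperFilter F}
  (Av : J -> (n.-tuple G -> \bar R) -> \bar R) (M : (n.-tuple G -> \bar R) -> Prop) :
  (forall A B, sigmaX theta X0 A -> sigmaX theta X0 B ->
     M (fun t => P (A `&` theta t @` B))) ->
  (forall A B, sigmaX theta X0 A -> sigmaX theta X0 B ->
     M (fun t => `|P (A `&` theta t @` B) - P A * P B|%E)) ->
  (forall r : R, 0 <= r -> M (cst r%:E)) ->
  (forall f g, M f -> M g -> M (fun t => f t + g t)%E) ->
  (forall r : R, 0 <= r -> \forall j \near F, Av j (cst r%:E) = r%:E) ->
  (forall j f g, M f -> M g -> (forall t, 0 <= f t)%E ->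
    (forall t, 0 <= g t)%E -> Av j (fun t => f t + g t)%E = (Av j f + Av j g)%E) ->
  (\forall j \near F, forall f g, M f -> M g -> (forall t, 0 <= f t)%E ->
    (forall t, f t <= g t)%E -> (Av j f <= Av j g)%E) ->
  (forall A B, sigmaX theta X0 A -> sigmaX theta X0 B ->
     Av j (fun t => P (A `&` theta t @` B)) @[j --> F] --> (P A * P B)%E) <->
  (forall A B, sigmaX theta X0 A -> sigmaX theta X0 B ->
     Av j (fun t => `|P (A `&` theta t @` B) - P A * P B|%E) @[j --> F] --> 0%E).
Proof.
move=> Mphi MD Mcst Madd Avc Avadd Avle.
exact: (@core_equiv _ _ _ P _ theta (sigmaX theta X0) Gorth sigmaX_Gorth Gorth_setI
  sigmaX_meas img_meas img_inj img_T img_P (fun A B t => @assoc_img hass A B t)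
  J F PF Av M Mphi MD Mcst Madd Avc Avadd Avle).
Qed.

End Field.


Section Zbox.
Context {R : realType}.

Lemma box_sum_add (T n : nat) (f g : n.-tuple int -> \bar R) :
  box_sum T (fun t => f t + g t)%E = (box_sum T f + box_sum T g)%E.
Proof.
elim: n f g => [//|n ih] f g /=.
rewrite -big_split /=; apply: eq_bigr => k _; exact: ih.
Qed.

Lemma box_sum_le (T n : nat) (f g : n.-tuple int -> \bar R) :
  (forall t, f t <= g t)%E -> (box_sum T f <= box_sum T g)%E.
Proof.
elim: n f g => [|n ih] f g fg /=; first exact: fg.
apply: lee_sum => k _; apply: ih => t; exact: fg.
Qed.

Lemma box_sum_ge0 (T n : nat) (f : n.-tuple int -> \bar R) :
  (forall t, 0 <= f t)%E -> (0 <= box_sum T f)%E.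
Proof.
elim: n f => [|n ih] f f0 /=; first exact: f0.
apply: sume_ge0 => k _; apply: ih => t; exact: f0.
Qed.

Lemma box_sum_cst (T n : nat) (r : R) :
  box_sum T (fun _ : n.-tuple int => r%:E) = (((2 * T) ^ n)%:R * r)%:E.
Proof.
elim: n => [|n ih] /=; first by rewrite mul1r.
under eq_bigr do rewrite ih.
rewrite sumEFin sumr_const card_ord expnS natrM -mulr_natl; congr (_%:E); ring.
Qed.

Definition AvZ (n : nat) (T : nat) (f : n.-tuple int -> \bar R) : \bar R :=
  (((((2 * T) ^ n)%:R : R)^-1)%:E * box_sum T f)%E.

End Zbox.

Theorem partZ (R : realType) (d : nat)
  (dO : measure_display) (Omega : measurableType dO) (P : probability Omega R) :
  (forall (theta : d.-tuple int -> Omega -> Omega) (X0 : Omega -> R),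
     mp_action P theta ->
     measurable_fun setT X0 ->
     associated P theta X0 ->
     (ergodicZ P theta X0 <-> weakly_mixingZ P theta X0)).
Proof.
move=> theta X0 hth mX0 hass.
have c0 (T : nat) : (0 <= ((((2 * T) ^ d)%:R : R)^-1)%:E)%E by rewrite lee_fin invr_ge0.
apply: (@field_equiv _ _ _ _ _ P theta X0 hth mX0 hass nat \oo _ (@AvZ R d) (fun _ => True)) => //.
- move=> r r0; near=> T.
  have T0 : (0 < T)%N by near: T; exists 1%N.
  rewrite /AvZ /= box_sum_cst -EFinM mulrA mulVf ?mul1r //.
  by rewrite pnatr_eq0 expn_eq0 negb_and muln_eq0 -!lt0n T0.
- move=> j f g _ _ f0 g0; rewrite /AvZ box_sum_add ge0_muleDr //; exact: box_sum_ge0.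
- apply: nearW => j f g _ _ f0 fg; rewrite /AvZ; apply: lee_wpmul2l => //; exact: box_sum_le.
Unshelve. all: end_near.
Qed.


Section Rbox.
Context {R : realType} (T : R).
Let D : set R := `](- T), T]%classic.
Let mD : measurable D. Proof. exact: measurable_itv. Qed.

Lemma box_int_ge0 n (f : n.-tuple R -> \bar R) :
  (forall t, 0 <= f t)%E -> (0 <= box_int T f)%E.
Proof.
elim: n f => [|n ih] f f0 /=; first exact: f0.
apply: integral_ge0 => x _; apply: ih => t; exact: f0.
Qed.

Lemma box_int_meas n {dY} (Y : measurableType dY) (F : Y * n.-tuple R -> \bar R) :
  measurable_fun setT F -> (forall z, 0 <= F z)%E ->
  measurable_fun setT (fun y => box_int T (fun s => F (y, s))).
Proof.
elim: n dY Y F => [|n ih] dY Y F mF F0 /=.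
  by apply: measurableT_comp => //; try apply: measurable_fun_pair.
pose G (z : (Y * R) * n.-tuple R) := F (z.1.1, [tuple of z.1.2 :: z.2]).
have mG : measurable_fun setT G.
  apply: measurableT_comp => //; apply: measurable_fun_pair.
    by apply: measurableT_comp => //; exact: measurable_fst.
  apply: measurable_cons; last exact: measurable_snd.
  by apply: measurableT_comp => //; try exact: measurable_snd; try exact: measurable_fst.
have G0 z : (0 <= G z)%E by exact: F0.
have := ih _ _ G mG G0.
set h := (fun y => box_int T (fun s => G (y, s))) => mh.
have h0 z : (0 <= h z)%E by apply: box_int_ge0 => t; exact: G0.
pose k (z : Y * R) := (h z * (\1_D z.2)%:E)%E.
have mk : measurable_fun setT k.
  apply: emeasurable_funM => //; apply/measurable_EFinP.
  apply: measurableT_comp; last exact: measurable_snd.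
  exact: measurable_indic.
have k0 z : (0 <= k z)%E by rewrite /k mule_ge0 // lee_fin.
have := @measurable_fun_fubini_tonelli_F _ _ _ _ _ (@lebesgue_measure R) k mk k0.
apply: eq_measurable_fun => y _.
rewrite /fubini_F [RHS]integral_mkcond; apply: eq_integral => x _.
rewrite /k /patch indicE; case: ifPn => xD; first by rewrite mule1.
by rewrite mule0.
Qed.


Let fib n (f : n.+1.-tuple R -> \bar R) : measurable_fun setT f ->
  measurable_fun setT (fun z : R * n.-tuple R => f [tuple of z.1 :: z.2]).
Proof.
move=> mf; apply: measurableT_comp => //.
by apply: measurable_cons; [exact: measurable_fst|exact: measurable_snd].
Qed.

Let fibx n (f : n.+1.-tuple R -> \bar R) x : measurable_fun setT f ->
  measurable_fun setT (fun s : n.-tuple R => f [tuple of x :: s]).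
Proof.
move=> mf; apply: measurableT_comp => //.
by apply: measurable_cons => //; exact: measurable_cst.
Qed.

Lemma box_int_add n (f g : n.-tuple R -> \bar R) :
  measurable_fun setT f -> measurable_fun setT g ->
  (forall t, 0 <= f t)%E -> (forall t, 0 <= g t)%E ->
  box_int T (fun t => f t + g t)%E = (box_int T f + box_int T g)%E.
Proof.
elim: n f g => [//|n ih] f g mf mg f0 g0 /=.
transitivity (\int[@lebesgue_measure R]_(x in D)
   (box_int T (fun s => f [tuple of x :: s]) + box_int T (fun s => g [tuple of x :: s])))%E.
  by apply: eq_integral => x _; apply: ih => //; exact: fibx.
rewrite ge0_integralD //.
- by move=> x _; apply: box_int_ge0.
- by apply: measurable_funTS; apply: (box_int_meas (F := fun z => f [tuple of z.1 :: z.2])) => //; exact: fib.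
- by move=> x _; apply: box_int_ge0.
- by apply: measurable_funTS; apply: (box_int_meas (F := fun z => g [tuple of z.1 :: z.2])) => //; exact: fib.
Qed.

Lemma box_int_le n (f g : n.-tuple R -> \bar R) :
  measurable_fun setT f -> measurable_fun setT g ->
  (forall t, 0 <= f t)%E -> (forall t, f t <= g t)%E ->
  (box_int T f <= box_int T g)%E.
Proof.
elim: n f g => [|n ih] f g mf mg f0 fg /=; first exact: fg.
have g0 t : (0 <= g t)%E by apply: le_trans (fg t).
apply: ge0_le_integral => //.
- by move=> x _; apply: box_int_ge0.
- by apply: measurable_funTS; apply: (box_int_meas (F := fun z => f [tuple of z.1 :: z.2])) => //; exact: fib.
- by apply: measurable_funTS; apply: (box_int_meas (F := fun z => g [tuple of z.1 :: z.2])) => //; exact: fib.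
- by move=> x _; apply: ih => //; exact: fibx.
Qed.

Lemma box_int_cst n (r : R) : 0 < T ->
  box_int T (fun _ : n.-tuple R => r%:E) = (((2 * T) ^+ n) * r)%:E.
Proof.
move=> T0; elim: n => [|n ih] /=; first by rewrite expr0 mul1r.
have lD : @lebesgue_measure R `](- T)%R, T]%classic = ((T - - T)%R)%:E.
  by rewrite lebesgue_measure_itv /= lte_fin ifT -?EFinD //; lra.
rewrite ih integral_cst //.
transitivity ((((2 * T) ^+ n * r)%:E * ((T - - T)%R)%:E)%E); first by congr (_ * _)%E; exact: lD.
by rewrite -EFinM exprS; congr (_%:E); ring.
Qed.

End Rbox.

Section Rfield.
Context (R : realType) (d : nat) (dO : measure_display) (Omega : measurableType dO)
  (P : probability Omega R) (theta : d.-tuple R -> Omega -> Omega) (X0 : Omega -> R).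
Hypothesis hth : mp_action P theta.
Hypothesis mX0 : measurable_fun setT X0.
Hypothesis mj : measurable_fun setT (fun p : d.-tuple R * Omega => X0 (theta p.1 p.2)).

Let thD s t : theta (tadd s t) = theta s \o theta t. Proof. by case: hth. Qed.

Lemma tsub_meas (s : d.-tuple R) : measurable_fun setT (fun t : d.-tuple R => tadd s (tneg t)).
Proof.
apply/measurable_fun_tnthP => i.
have -> : (tnth (T:=R))^~ i \o (fun t : d.-tuple R => tadd s (tneg t)) =
    (fun t => tnth s i - tnth t i).
  by apply/funext => t /=; rewrite !tnth_map !tnth_ord_tuple.
apply: measurable_funB; first exact: measurable_cst.
exact: measurable_tnth.
Qed.

Let Phi (z : d.-tuple R * Omega) := theta (tneg z.1) z.2.

Lemma Phi_meas B : sigmaX theta X0 B -> measurable (Phi @^-1` B).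
Proof.
move: B; apply: smallest_sub.
- split.
  + by rewrite /= preimage_set0.
  + by move=> A mA; rewrite /= setTD preimage_setC; apply: measurableC.
  + by move=> F mF; rewrite /= preimage_bigcup; apply: bigcupT_measurable.
- move=> _ [s [C [mC ->]]].
  have -> : Phi @^-1` (field theta X0 s @^-1` C) =
      (fun z : d.-tuple R * Omega => X0 (theta (tadd s (tneg z.1)) z.2)) @^-1` C.
    by apply/seteqP; split => z; rewrite /= /field /Phi thD.
  rewrite -[X in measurable X]setTI.
  have mg : measurable_fun setT (fun z : d.-tuple R * Omega => (tadd s (tneg z.1), z.2)).
    apply: measurable_fun_pair; last exact: measurable_snd.
    exact: (measurableT_comp (tsub_meas s) measurable_fst).
  exact: (measurableT_comp mj mg) measurableT _ mC.
Qed.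

Lemma phi_meas A B : sigmaX theta X0 A -> sigmaX theta X0 B ->
  measurable_fun setT (fun t : d.-tuple R => P (A `&` theta t @` B)).
Proof.
move=> hA hB.
pose E := (setT `*` A) `&` (Phi @^-1` B).
have mE : measurable E.
  apply: measurableI; last exact: Phi_meas.
  by apply: measurableX => //; exact: sigmaX_meas hth mX0 _ hA.
have := measurable_fun_xsection P mE.
apply: eq_measurable_fun => t _ /=; congr (P _).
rewrite (imgE hth); apply/seteqP; split => w; rewrite /xsection /= inE /E /Phi /=.
- by move=> [[_ Aw] Bw].
- by move=> [Aw Bw].
Qed.

End Rfield.

Definition AvR {R : realType} (n : nat) (T : R) (f : n.-tuple R -> \bar R) : \bar R :=
  ((((2 * T) ^+ n)^-1)%:E * box_int T f)%E.

Theorem partR (R : realType) (d : nat)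
  (dO : measure_display) (Omega : measurableType dO) (P : probability Omega R) :
  (forall (theta : d.-tuple R -> Omega -> Omega) (X0 : Omega -> R),
     mp_action P theta ->
     measurable_fun setT X0 ->
     measurable_fun setT (fun p : d.-tuple R * Omega => X0 (theta p.1 p.2)) ->
     associated P theta X0 ->
     (ergodicR P theta X0 <-> weakly_mixingR P theta X0)).
Proof.
move=> theta X0 hth mX0 mj hass.
apply: (@field_equiv _ _ _ _ _ P theta X0 hth mX0 hass R _ _ (@AvR R d)
  (fun f => measurable_fun setT f)).
- by move=> A B hA hB; exact: (phi_meas hth mX0 mj).
- move=> A B hA hB; apply: measurableT_comp; first exact: abse_measurable.
  by apply: emeasurable_funB; [exact: (phi_meas hth mX0 mj)|exact: measurable_cst].
- by move=> r _; exact: measurable_cst.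
- by move=> f g mf mg; exact: emeasurable_funD.
- move=> r r0; near=> T.
  have T0 : 0 < T by near: T; apply: nbhs_pinfty_gt; rewrite num_real.
  rewrite /AvR box_int_cst // -EFinM mulrA mulVf ?mul1r //.
  by rewrite expf_neq0 // mulf_neq0 // ?gt_eqF //; lra.
- move=> j f g mf mg f0 g0; rewrite /AvR box_int_add // ge0_muleDr //;
    exact: box_int_ge0.
- near=> T => f g mf mg f0 fg.
  have T0 : 0 < T by near: T; apply: nbhs_pinfty_gt; rewrite num_real.
  rewrite /AvR; apply: lee_wpmul2l; first by rewrite lee_fin invr_ge0 exprn_ge0 // mulr_ge0 //; lra.
  exact: box_int_le.
Unshelve. all: end_near.
Qed.


Unset Implicit Arguments.

(* Part 1: T = Z ; Part 2: T = R (measurable = jointly measurable in (t, w)). *)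
Theorem mainTheorem17 (R : realType) (d : nat) (hd : (0 < d)%N)
  (dO : measure_display) (Omega : measurableType dO) (P : probability Omega R) :
  (forall (theta : d.-tuple int -> Omega -> Omega) (X0 : Omega -> R),
     mp_action P theta ->
     measurable_fun setT X0 ->
     associated P theta X0 ->
     (ergodicZ P theta X0 <-> weakly_mixingZ P theta X0))
  /\
  (forall (theta : d.-tuple R -> Omega -> Omega) (X0 : Omega -> R),
     mp_action P theta ->
     measurable_fun setT X0 ->
     measurable_fun setT (fun p : d.-tuple R * Omega => X0 (theta p.1 p.2)) ->
     associated P theta X0 ->
     (ergodicR P theta X0 <-> weakly_mixingR P theta X0)).
Proof.
split; [exact: partZ|exact: partR].
Qed.
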